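(* Let $U$ be a finite-dimensional complex vector space with basis $\mathbb B$, $w:U\to U$ linear, and $A=[w]_{(\mathbb B,\preceq)}$ the matrix of $w$ with respect to an arbitrary total ordering $\preceq$ of $\mathbb B$. Then $w$ acts on $(U,\mathbb B)$ by some bijection up to lower-order terms if and only if there exist permutation matrices $P_1,P_2$ such that $P_1AP_2$ is an upper-triangular integer matrix whose diagonal entries are all $\pm1$.
   Context: $w$ acts on $(U,\mathbb B)$ by some bijection up to lower-order terms if there exist a bijection $\xi:\mathbb B\to\mathbb B$ and a preorder $\le$ on $\mathbb B$ such that for every $x\in\mathbb B$ there are integers $a_y$ with $w(x)=\pm\xi(x)+\sum_{y<x}a_y\xi(y)$, the sign depending only on the equivalence class of $x$ under the equivalence relation induced by $\le$. *)

(* Defs.v *)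
From HB Require Import structures.
From mathcomp Require Import all_boot all_order all_algebra all_fingroup.
From mathcomp Require Import complex.
From mathcomp Require Import reals.
Set Implicit Arguments. Unset Strict Implicit. Unset Printing Implicit Defensive.
Import Order.TTheory GRing.Theory Num.Theory.
Local Open Scope ring_scope.

(* Matrix of w w.r.t. the basis b, the basis vectors being totally ordered
   by their position in the tuple b; column j holds the coordinates of
   w (b_j). *)
Definition basis_mx (R : realType) (U : vectType R[i]) (n : nat)
  (b : n.-tuple U) (w : 'End(U)) : 'M[R[i]]_n :=
  \matrix_(i < n, j < n) coord b i (w (tnth b j)).

Definition strict_of (T : Type) (le : rel T) : rel T :=
  fun y x => le y x && ~~ le x y.

Definition acts_by_bij_lot (R : realType) (U : vectType R[i]) (n : nat)
  (b : n.-tuple U) (w : 'End(U)) : Prop :=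
  exists (xi : {perm 'I_n}) (le : rel 'I_n),
    [/\ reflexive le, transitive le &
      exists sg : 'I_n -> bool,
        (forall x y, le x y -> le y x -> sg x = sg y) /\
        forall x : 'I_n, exists a : 'I_n -> int,
          w (tnth b x) = (-1) ^+ sg x *: tnth b (xi x)
            + \sum_(y | strict_of le y x) (a y)%:~R *: tnth b (xi y)].

Definition upper_tri_int_pm1 (n : nat) (M : 'M[int]_n) : Prop :=
  (forall i j : 'I_n, (j < i)%N -> M i j = 0) /\
  (forall i : 'I_n, M i i = 1 \/ M i i = -1).

(* Main.v *)
Require Import Defs.
From HB Require Import structures.
From mathcomp Require Import all_boot all_order all_algebra all_fingroup.
From mathcomp Require Import complex.
From mathcomp Require Import reals.
From mathcomp Require Import zify.
Import Order.TTheory GRing.Theory Num.Theory.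
Local Open Scope ring_scope.

Section H.
Variables (R : realType) (U : vectType R[i]) (n : nat) (b : n.-tuple U).
Hypothesis hb : basis_of fullv b.

Lemma coord_tnth (i k : 'I_n) : coord b i (tnth b k) = (k == i)%:R.
Proof. by rewrite (tnth_nth 0) coord_free // (basis_free hb). Qed.

Lemma expand v : v = \sum_i coord b i v *: tnth b i.
Proof.
rewrite {1}(coord_basis hb (memvf v)); apply: eq_bigr => i _.
by rewrite (tnth_nth 0).
Qed.

Lemma entry_pp (A : 'M[R[i]]_n) s1 s2 i j :
  (perm_mx s1 *m A *m perm_mx s2) i j = A (s1 i) ((s2^-1)%g j).
Proof.
have -> : perm_mx s1 *m A *m perm_mx s2 = col_perm (s2^-1)%g (row_perm s1 A).
  by rewrite col_permE invgK row_permE.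
by rewrite !mxE.
Qed.
End H.
Lemma from_mx (R : realType) (U : vectType R[i]) (n : nat)
  (b : n.-tuple U) (hb : basis_of fullv b) (w : 'End(U)) s1 s2 M :
  perm_mx s1 *m basis_mx b w *m perm_mx s2 = map_mx intr M ->
  upper_tri_int_pm1 M -> acts_by_bij_lot b w.
Proof.
move=> eM [Mup Mdiag].
have eA k x : basis_mx b w k x = (M ((s1^-1)%g k) (s2 x))%:~R.
  have := congr1 (fun N : 'M_n => N ((s1^-1)%g k) (s2 x)) eM => /=.
  by rewrite entry_pp !mxE permKV permK.
exists (s2 * s1)%g, (fun y x => (s2 y <= s2 x)%N); split.
- by move=> x.
- by move=> y x z; apply: leq_trans.
exists (fun x => M (s2 x) (s2 x) == -1); split.
  move=> x y h1 h2; have /perm_inj -> : s2 x = s2 y.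
    by apply/val_inj/eqP; rewrite eqn_leq h1 h2.
  by [].
move=> x; exists (fun y => M (s2 y) (s2 x)).
rewrite {1}(@expand _ _ _ _ hb (w (tnth b x))).
rewrite (reindex_inj (@perm_inj _ (s2 * s1)%g)) /=.
have ec y : coord b y (w (tnth b x)) = basis_mx b w y x by rewrite mxE.
under eq_bigr => y _ do rewrite ec eA permM permK.
rewrite (bigD1 x) //=; congr (_ + _).
  by rewrite permM; case: (Mdiag (s2 x)) => ->; rewrite ?eqxx //= ?expr0 ?expr1 // -[1]/(1%:~R) ?intrN.
rewrite big_mkcond [RHS]big_mkcond; apply: eq_bigr => y _ /=.
rewrite /strict_of permM.
case: (eqVneq y x) => [->|nyx]; first by rewrite leqnn.
have ns : s2 y != s2 x by apply: contra nyx => /eqP/perm_inj ->.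
case: (ltngtP (s2 y) (s2 x)) => h.
- by [].
- by rewrite /= Mup // scale0r.
- by move: ns; rewrite (val_inj h) eqxx.
Qed.
Lemma linext (n : nat) (st : rel 'I_n) :
  (forall x, ~~ st x x) -> (forall x y z, st z y -> st y x -> st z x) ->
  exists rho : 'S_n, forall x y, st y x -> (rho y < rho x)%N.
Proof.
move=> irr tr.
pose h x := #|[set y | st y x]|.
have hlt y x : st y x -> (h y < h x)%N.
  move=> yx; apply: proper_card; apply/properP; split.
    by apply/subsetP => z; rewrite !inE => zy; apply: tr zy yx.
  by exists y; rewrite !inE ?yx ?(negbTE (irr y)).
pose lt' y x := (h y < h x)%N || ((h y == h x) && (y < x)%N).
pose rho x := #|[set y | lt' y x]|.
have ltirr x : lt' x x = false by rewrite /lt' ltnn eqxx ltnn.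
have lttr x y z : lt' z y -> lt' y x -> lt' z x.
  rewrite /lt' => /orP[h1|/andP[/eqP h1 h2]] /orP[h3|/andP[/eqP h3 h4]];
  apply/orP; lia.
have rlt y x : lt' y x -> (rho y < rho x)%N.
  move=> yx; apply: proper_card; apply/properP; split.
    by apply/subsetP => z; rewrite !inE => zy; apply: lttr zy yx.
  by exists y; rewrite !inE ?yx ?ltirr.
have rb x : (rho x < n)%N.
  rewrite -[n]card_ord -cardsT; apply: proper_card; apply/properP; split.
    exact: subsetT.
  by exists x; rewrite !inE ?ltirr.
pose r x := Ordinal (rb x).
have rinj : injective r.
  move=> x y /(congr1 val) /= e; apply/eqP; apply: contraT => nxy.
  have : lt' x y || lt' y x.
    rewrite /lt'; case: (ltngtP (h x) (h y)) => //= _.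
    by case: (ltngtP x y) => // /val_inj exy; rewrite exy eqxx in nxy.
  by case/orP => /rlt; rewrite e ltnn.
exists (perm rinj) => x y /hlt hxy; rewrite !permE /=; apply: rlt.
by rewrite /lt' hxy.
Qed.

Lemma sum_pick (R : ringType) n (P : pred 'I_n) (F : 'I_n -> R) y0 :
  \sum_(y | P y) F y * (y == y0)%:R = if P y0 then F y0 else 0.
Proof.
case: ifP => Py0.
  rewrite (bigD1 y0) //= eqxx mulr1 big1 ?addr0 // => y /andP[_ /negbTE ->].
  by rewrite mulr0.
apply: big1 => y Py; case: eqP => [ey|_]; last by rewrite mulr0.
by rewrite ey Py0 in Py.
Qed.

Lemma to_mx (R : realType) (U : vectType R[i]) (n : nat)
  (b : n.-tuple U) (hb : basis_of fullv b) (w : 'End(U)) :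
  acts_by_bij_lot b w ->
  exists (s1 s2 : 'S_n) (M : 'M[int]_n),
    perm_mx s1 *m basis_mx b w *m perm_mx s2 = map_mx intr M /\
    upper_tri_int_pm1 M.
Proof.
case=> xi [le [lerefl letr [sg [_ ha]]]].
have [a ha'] := fin_all_exists ha.
pose st := strict_of le.
have irr x : ~~ st x x by rewrite /st /strict_of lerefl.
have sttr x y z : st z y -> st y x -> st z x.
  rewrite /st /strict_of => /andP[zy nyz] /andP[yx nxy].
  rewrite (letr _ _ _ zy yx) /=; apply: contra nyz => xz.
  exact: letr xz.
have [rho hrho] := @linext n st irr sttr.
pose M : 'M[int]_n := \matrix_(i, j)
  (let y0 := (rho^-1)%g i in let x := (rho^-1)%g j in
   if y0 == x then (-1) ^+ sg x else if st y0 x then a x y0 else 0).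
exists (rho^-1 * xi)%g, rho, M; split; last split.
- apply/matrixP => i j; rewrite entry_pp !mxE permM.
  rewrite ha' linearD linearZ linear_sum /= coord_tnth //.
  under eq_bigr => y _ do rewrite linearZ /= coord_tnth // (inj_eq perm_inj).
  rewrite (inj_eq perm_inj).
  under eq_bigr => y _ do rewrite mulr_natr -mulr_natr.
  rewrite sum_pick.
  case: (eqVneq i j) => [<-|nij].
    have := irr (rho^-1%g i); rewrite /st => /negbTE ->; rewrite eqxx mulr1 addr0.
    by case: (sg _); rewrite ?expr0 ?expr1 ?intrN.
  rewrite (inj_eq perm_inj) (inj_eq perm_inj) eq_sym (negbTE nij) mulr0 add0r.
  by rewrite /st; case: ifP.
- move=> i j ji; rewrite !mxE.
  have nij : i != j by apply: contraTneq ji => ->; rewrite ltnn.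
  rewrite /= (inj_eq perm_inj) (negbTE nij); case: ifP => // hs.
  have := hrho _ _ hs; rewrite !permKV => lij.
  by have := ltn_trans lij ji; rewrite ltnn.
- move=> i; rewrite !mxE /= eqxx.
  by case: (sg _); rewrite ?expr0 ?expr1; [right|left].
Qed.

Theorem corollaryA3 (R : realType) (U : vectType R[i]) (n : nat)
  (b : n.-tuple U) (hb : basis_of fullv b) (w : 'End(U)) :
  acts_by_bij_lot b w <->
  exists (s1 s2 : 'S_n) (M : 'M[int]_n),
    perm_mx s1 *m basis_mx b w *m perm_mx s2 = map_mx intr M /\
    upper_tri_int_pm1 M.
Proof.
split; first exact: to_mx.
by case=> s1 [s2 [M [eM hM]]]; exact: (@from_mx R U n b hb w s1 s2 M eM hM).
Qed.
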